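(* Let $L$ be a finite lattice, $(x,y,z)\in L^3$ with $x\le y\le z$, let $S_{x,y}$ be a lower cross-cut of $[x,y]$ and $S_{y,z}$ a lower cross-cut of $[y,z]$, and let $S_{x,y,z}=S_{x,y}\sqcup S_{y,z}$. Then $$J(x,y,z)=\sum_{\substack{A\subseteq S_{x,y,z}\\ \bigvee (A\cap S_{x,y})=y\\ \bigvee(A\cap S_{y,z})=z}}(-1)^{|A|}.$$
   Context: For $u\le v$ in $L$, $[u,v]=\{a\in L: u\le a\le v\}$. A lower cross-cut of $[u,v]$ is a set $S\subseteq[u,v]\setminus\{u\}$ such that for every $b\in[u,v]\setminus(S\cup\{u\})$ there is some $a\in S$ with $a<b$. (Note $S_{x,y}\cap S_{y,z}=\emptyset$ since $y\notin S_{y,z}$.) In the sum, $\bigvee(A\cap S_{x,y})$ is the join in $L$, with the join of the empty subset of $S_{x,y}$ taken to be $x$, and $\bigvee(A\cap S_{y,z})$ is the join in $L$, with the join of the empty subset of $S_{y,z}$ taken to be $y$. Let $\delta_3(x,y,z)=1$ if $x=y=z$ and $0$ otherwise. The function $J$ on triples $x\le y\le z$ of $L$ is the unique integer-valued function satisfying $\sum_{x\le a\le y\le b\le z}J(a,y,b)=\delta_3(x,y,z)$ for all $x\le y\le z$ (sum over $a,b\in L$). *)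

(* Defs.v *)
From HB Require Import structures.
From mathcomp Require Import all_boot all_order all_algebra.
Set Implicit Arguments. Unset Strict Implicit. Unset Printing Implicit Defensive.
Import Order.Theory GRing.Theory.
Local Open Scope order_scope.

Definition itv_set (d : Order.disp_t) (L : finLatticeType d) (u v : L) : {set L} :=
  [set a : L | (u <= a) && (a <= v)].

Definition lower_crosscut (d : Order.disp_t) (L : finLatticeType d) (u v : L)
    (S : {set L}) : Prop :=
  S \subset itv_set u v :\ u /\
  forall b : L, b \in itv_set u v -> b \notin S -> b != u ->
    exists2 a, a \in S & a < b.

Definition is_J (d : Order.disp_t) (L : finLatticeType d) (J : L -> L -> L -> int)
    : Prop :=
  forall x y z : L, x <= y -> y <= z ->
    (\sum_(a : L | ((x <= a) && (a <= y))%O) \sum_(b : L | ((y <= b) && (b <= z))%O) J a y b)%R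
    = (if (x == y) && (y == z) then 1%R else 0%R).

Definition join_from (d : Order.disp_t) (L : finLatticeType d) (e : L) (B : {set L}) : L :=
  \big[Order.join/e]_(a in B) a.

(* Main.v *)
Require Import Defs.
From HB Require Import structures.
From mathcomp Require Import all_boot all_order all_algebra.
Import Order.Theory GRing.Theory.
Local Open Scope ring_scope.
Set Implicit Arguments. Unset Strict Implicit. Unset Printing Implicit Defensive.

Section S.
Variables (d : Order.disp_t) (L : finLatticeType d).
Implicit Types (u v t : L) (A B S : {set L}).

Lemma jf_seq u t (s : seq L) :
  (\big[Order.join/u]_(a <- s) a <= t)%O = (u <= t)%O && all (fun a => a <= t)%O s.
Proof.
elim: s => [|a s IH]; first by rewrite big_nil andbT.
by rewrite big_cons leUx IH /= andbCA.
Qed.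

Lemma jf_le u t A :
  (join_from u A <= t)%O = (u <= t)%O && (A \subset [set a | (a <= t)%O]).
Proof.
rewrite /join_from -big_enum jf_seq; congr (_ && _).
apply/allP/subsetP => H a; first by move=> aA; rewrite inE H // mem_enum.
by rewrite mem_enum => /H; rewrite inE.
Qed.

Lemma jf_ge u A : (u <= join_from u A)%O.
Proof. by move: (jf_le u (join_from u A) A); rewrite lexx => /esym/andP[]. Qed.

Lemma alt_sum B :
  (\sum_(A : {set L} | A \subset B) (-1) ^+ #|A| : int) = (B == set0)%:R.
Proof.
have [->|[b bB]] := set_0Vmem B.
  rewrite eqxx (big_pred1 set0) ?cards0 // => A; by rewrite subset0.
have -> : (B == set0) = false by apply/negbTE/set0Pn; exists b.
rewrite (bigID (fun A : {set L} => b \in A)) /=.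
rewrite (reindex_onto (fun A => b |: A) (fun A => A :\ b)) /=; last first.
  by move=> A /andP[_ bA]; rewrite setD1K.
have E : forall j : {set L}, ((b |: j) :\ b == j) = (b \notin j).
  move=> j; case bj: (b \in j) => /=; last by rewrite setU1K ?bj ?eqxx.
  apply/negbTE/eqP => E; have: b \in (b |: j) :\ b by rewrite E.
  by rewrite !inE eqxx.
rewrite [X in X + _](eq_bigl (fun j : {set L} => (j \subset B) && (b \notin j))); last first.
  by move=> j; rewrite E subUset sub1set bB setU11 andbT.
rewrite -addrC -big_split /= big1 // => j /andP[_ bj].
by rewrite cardsU1 bj exprS mulN1r addrN.
Qed.

Definition gS u S w : int :=
  \sum_(A : {set L} | (A \subset S) && (join_from u A == w)) (-1) ^+ #|A|.

Lemma crosscut_sum u v S : lower_crosscut u v S -> forall t, (u <= t)%O -> (t <= v)%O ->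
  \sum_(w | (u <= w)%O && (w <= t)%O) gS u S w = (u == t)%:R.
Proof.
move=> [sub cov] t ut tv.
rewrite /gS.
rewrite (eq_bigr (fun w => \sum_(A : {set L} | ((A \subset S) && (join_from u A <= t)%O)
     && (join_from u A == w)) (-1) ^+ #|A|)); last first.
  move=> w /andP[_ wt]; apply: eq_bigl => A.
  by case: eqP => [->|]; rewrite ?wt ?andbT ?andbF.
rewrite -(partition_big (fun A => join_from u A) (fun w => (u <= w)%O && (w <= t)%O)); last first.
  by move=> A /andP[_ ->]; rewrite jf_ge.
rewrite (eq_bigl (fun A : {set L} => A \subset S :&: [set a | (a <= t)%O])); last first.
  by move=> A; rewrite jf_le ut subsetI.
rewrite alt_sum; case: (eqVneq u t) => [<-|ut'].
  suff -> : S :&: [set a | (a <= u)%O] = set0 by rewrite eqxx.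
  apply/setP => a; rewrite !inE.
  apply/negbTE/andP => -[aS au].
  move: (subsetP sub a aS); rewrite !inE => /andP[/negP + /andP[ua _]]; apply.
  by apply/eqP/le_anti; rewrite au ua.
suff /negbTE -> : S :&: [set a | (a <= t)%O] != set0 by [].
have tI : t \in itv_set u v by rewrite inE ut tv.
case tS: (t \in S); apply/set0Pn.
  by exists t; rewrite !inE tS lexx.
have : t != u by rewrite eq_sym.
move=> /(cov t tI (negbT tS)) [a aS hat].
by exists a; rewrite !inE aS (ltW hat).
Qed.

Lemma uniq_sum y z (f1 f2 : L -> int) :
  (forall t, (y <= t)%O -> (t <= z)%O ->
     \sum_(b | (y <= b)%O && (b <= t)%O) f1 b = \sum_(b | (y <= b)%O && (b <= t)%O) f2 b) ->
  forall t, (y <= t)%O -> (t <= z)%O -> f1 t = f2 t.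
Proof.
move=> H t.
suff: forall n t, (#|[set b | (y <= b)%O && (b <= t)%O]| <= n)%N ->
   (y <= t)%O -> (t <= z)%O -> f1 t = f2 t by apply; apply: leqnn.
elim=> [|n IH] {}t Hn yt tz.
  have : t \in [set b | (y <= b)%O && (b <= t)%O] by rewrite inE yt lexx.
  move=> tin; suff: (0 < #|[set b | (y <= b)%O && (b <= t)%O]|)%N by rewrite ltnNge Hn.
  by apply/card_gt0P; exists t.
have := H t yt tz.
rewrite (bigD1 t) /= ?yt ?lexx // [in RHS](bigD1 t) /= ?yt ?lexx //.
rewrite (eq_bigr f2); first by move/addIr.
move=> b /andP[/andP[yb bt] bnt].
apply: IH yb (le_trans bt tz).
rewrite -ltnS; apply: leq_trans Hn; apply: proper_card; apply/properP; split.
  apply/subsetP => c; rewrite !inE => /andP[-> cb]; exact: le_trans cb bt.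
exists t; first by rewrite inE yt lexx.
rewrite inE yt /=; apply/negP => tb; move/negP: bnt; apply.
by apply/eqP/le_anti; rewrite bt tb.
Qed.
Lemma split_sum (S1 S2 : {set L}) (P1 P2 : pred {set L}) : S1 :&: S2 = set0 ->
  (\sum_(A : {set L} | [&& A \subset S1 :|: S2, P1 (A :&: S1) & P2 (A :&: S2)]) (-1) ^+ #|A| : int)
  = (\sum_(A1 : {set L} | (A1 \subset S1) && P1 A1) (-1) ^+ #|A1|) *
    (\sum_(A2 : {set L} | (A2 \subset S2) && P2 A2) (-1) ^+ #|A2|).
Proof.
move=> dis.
rewrite big_distrl /=.
rewrite (partition_big (fun A => A :&: S1) (fun A1 => (A1 \subset S1) && P1 A1)); last first.
  by move=> A /and3P[_ p1 _]; rewrite subsetIr p1.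
apply: eq_bigr => A1 /andP[A1S1 p1].
rewrite big_distrr /=.
rewrite (reindex_onto (fun A2 => A1 :|: A2) (fun A => A :&: S2)); last first.
  move=> A /andP[/and3P[AS _ _] /eqP <-].
  by rewrite -setIUr; apply/setIidPl.
have A1S2 : A1 :&: S2 = set0.
  by apply/eqP; rewrite -subset0 -dis setSI.
apply: eq_big => A2.
  have E2 : (A1 :|: A2) :&: S2 = A2 :&: S2 by rewrite setIUl A1S2 set0U.
  have E1 : (A1 :|: A2) :&: S1 = A1 :|: A2 :&: S1 by rewrite setIUl (setIidPl A1S1).
  rewrite E1 E2.
  case A2S2: (A2 \subset S2); last first.
    rewrite /=; apply/negbTE/negP => /andP[_ /eqP E].
    by move/negP: A2S2; apply; rewrite -E subsetIr.
  have A2S1 : A2 :&: S1 = set0.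
    by apply/eqP; rewrite -subset0 -dis setIC setIS.
  rewrite A2S1 setU0 (setIidPl A2S2) p1 !eqxx !andbT /=.
  by rewrite subUset (subset_trans A1S1 (subsetUl _ _)) (subset_trans A2S2 (subsetUr _ _)).
move=> /andP[_ /eqP E]; have A2S2 : A2 \subset S2 by rewrite -E subsetIr.
have I0 : A1 :&: A2 = set0.
  by apply/eqP; rewrite -subset0 -dis setISS.
by rewrite cardsU I0 cards0 subn0 exprD mulrC.
Qed.
End S.

Theorem theorem5p9 (d : Order.disp_t) (L : finLatticeType d)
    (J : L -> L -> L -> int) (HJ : is_J J)
    (x y z : L) (hxy : (x <= y)%O) (hyz : (y <= z)%O)
    (Sxy Syz : {set L})
    (hSxy : lower_crosscut x y Sxy) (hSyz : lower_crosscut y z Syz) :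
  J x y z =
  (\sum_(A : {set L} | [&& A \subset Sxy :|: Syz,
                          join_from x (A :&: Sxy) == y &
                          join_from y (A :&: Syz) == z]) (-1) ^+ #|A|)%R.
Proof.
pose g := gS x Sxy; pose h := gS y Syz.
have cut1 := crosscut_sum hSxy; have cut2 := crosscut_sum hSyz.
have Claim1 : forall t, (y <= t)%O -> (t <= z)%O ->
    \sum_(b | (y <= b)%O && (b <= t)%O) J x y b = g y * (y == t)%:R.
  move=> t yt tz.
  have K1 : \sum_(w | (x <= w)%O && (w <= y)%O) g w *
      (\sum_(a : L | ((w <= a) && (a <= y))%O) \sum_(b : L | ((y <= b) && (b <= t))%O) J a y b)
      = g y * (y == t)%:R.
    rewrite (bigD1 y) /= ?hxy ?lexx // HJ // eqxx /= big1 ?addr0; first by case: eqP.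
    move=> w /andP[/andP[_ wy] wny]; rewrite HJ // (negbTE wny) mulr0 //.
  rewrite -K1.
  under [RHS]eq_bigr do rewrite big_distrr /=.
  rewrite (exchange_big_dep (fun a => (x <= a)%O && (a <= y)%O)) /=; last first.
    by move=> w a /andP[xw _] /andP[wa ay]; rewrite (le_trans xw wa) ay.
  rewrite [RHS](eq_bigr (fun a => (x == a)%:R * \sum_(b : L | ((y <= b) && (b <= t))%O) J a y b)).
    rewrite [RHS](bigD1 x) /= ?lexx ?hxy // eqxx mul1r [X in _ + X]big1 ?addr0 //.
    by move=> a /andP[_ xa]; rewrite eq_sym (negbTE xa) mul0r.
  move=> a /andP[xa ay]; rewrite -big_distrl /= -(cut1 a xa ay); congr (_ * _).
  apply: eq_bigl => w; apply/idP/idP.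
    by move=> /andP[/andP[-> _] /andP[-> _]].
  by move=> /andP[xw wa]; rewrite xw (le_trans wa ay) wa ay.
have Jxy := @uniq_sum _ _ y z (J x y) (fun b => g y * h b).
rewrite Jxy //; last first.
  by move=> t yt tz; rewrite Claim1 // -big_distrr /= cut2.
have dis : Sxy :&: Syz = set0.
  apply/setP => a; rewrite !inE; apply/negbTE/andP => -[a1 a2].
  case: hSxy => [s1 _]; case: hSyz => [s2 _].
  move: (subsetP s1 a a1) (subsetP s2 a a2); rewrite !inE.
  move=> /andP[_ /andP[_ ay]] /andP[/negP + /andP[ya _]]; apply.
  by apply/eqP/le_anti; rewrite ay ya.
rewrite (split_sum (fun B => join_from x B == y) (fun B => join_from y B == z) dis).
by [].
Qed.
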